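(* Let $\alpha>0$ and define $\phi:[0,\infty)\to\mathbb{R}$ by $\phi(t)=e^{-\alpha\left(1+\tan\frac{\pi}{2}t^{2}\right)^{2}}$ for $0\le t<1$ and $\phi(t)=0$ for $t\ge 1$. For each integer $j\ge 1$, let $F_j(\alpha,u)$ be the polynomial in $\alpha,u$ with integer coefficients determined by $$\frac{d^{j}}{dt^{j}}\phi(\sqrt{t})=e^{-\alpha(1+u)^{2}}(-1)^{j}\alpha\left(\frac{\pi}{2}\right)^{j}(1+u^{2})\,F_{j}(\alpha,u),\qquad u=\tan\frac{\pi}{2}t,\quad 0<t<1,$$ valid for all $\alpha>0$. Then for each $j\ge 1$ there exists a number $\alpha_j>0$ such that $F_j(\alpha,u)\ge 0$ for all $\alpha\ge\alpha_j$ and all $u\ge 0$.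
   Context: For example, $F_1(\alpha,u)=2u+2$ and $F_2(\alpha,u)=4\alpha(1+u)^2(1+u^2)-2(1+u^2)-4(1+u)u$. The paper asserts that $F_j(\alpha,u)=a_j\alpha^{j-1}u^{3(j-1)+1}+\sum_{k=0}^{j-2}\sum_{l=0}^{3j-3}a_{kl}\alpha^k u^l$ with $a_j$ a positive integer and $a_{kl}$ integers. *)

(* Defs.v *)
From Stdlib Require Import Reals ZArith.
From Coquelicot Require Import Coquelicot.
Open Scope R_scope.

(* phi(t) = exp(-alpha (1 + tan(pi/2 t^2))^2) for t < 1, and 0 for t >= 1.
   (Only t >= 0 matters; the formula is also used for t < 0.) *)
Definition phi (alpha t : R) : R :=
  if Rlt_dec t 1 then exp (- alpha * (1 + tan (PI / 2 * t ^ 2)) ^ 2) else 0.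

Definition poly2_eval (d : nat) (c : nat -> nat -> Z) (a u : R) : R :=
  sum_f_R0 (fun k => sum_f_R0 (fun l => IZR (c k l) * a ^ k * u ^ l) d) d.

(* Main.v *)
Require Import Defs.
From Stdlib Require Import Reals ZArith Lia Lra List.
From Coquelicot Require Import Coquelicot.
Open Scope R_scope.

Fixpoint pev (l : list R) (u : R) : R :=
  match l with nil => 0 | a :: l' => a + u * pev l' u end.
Fixpoint padd (p q : list R) : list R :=
  match p, q with
  | nil, _ => q
  | _, nil => p
  | a :: p', b :: q' => (a + b) :: padd p' q'
  end.
Definition pscal (a : R) (p : list R) := map (fun x => a * x) p.
Definition mulX (p : list R) := match p with nil => nil | _ => 0 :: p end.
Fixpoint pder (l : list R) : list R :=
  match l with nil => nil | a :: l' => padd l' (mulX (pder l')) end.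

Lemma pev_padd p q u : pev (padd p q) u = pev p u + pev q u.
Proof.
  revert q; induction p as [|a p IH]; intros [|b q]; simpl; try ring.
  rewrite IH; ring.
Qed.
Lemma pev_pscal a p u : pev (pscal a p) u = a * pev p u.
Proof. unfold pscal; induction p as [|b p IH]; simpl; [ring|]. rewrite IH; ring. Qed.
Lemma pev_mulX p u : pev (mulX p) u = u * pev p u.
Proof. destruct p; simpl; ring. Qed.

Lemma is_derive_eq (f : R -> R) (x l l' : R) : is_derive f x l -> l = l' -> is_derive f x l'.
Proof. intros H <-; exact H. Qed.

Lemma is_derive_pev l u : is_derive (pev l) u (pev (pder l) u).
Proof.
  revert u; induction l as [|a l IH]; intros u.
  - simpl. apply (is_derive_ext (fun _ => 0)). intros; reflexivity. apply (is_derive_const (K := R_AbsRing) (V := R_NormedModule)).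
  - apply (is_derive_ext (fun x => a + x * pev l x)). intros; reflexivity.
    simpl pder. rewrite pev_padd, pev_mulX.
    assert (E : ex_derive (pev l) u) by (eexists; apply IH).
    eapply is_derive_eq. auto_derive. exact E. reflexivity.
    replace (Derive (fun x : R => pev l x) u) with (pev (pder l) u) by (symmetry; apply is_derive_unique; exact (IH u)). rewrite !Rmult_1_l; reflexivity.
Qed.
Lemma len_padd p q : length (padd p q) = Nat.max (length p) (length q).
Proof. revert q; induction p as [|a p IH]; intros [|b q]; simpl; auto. Qed.
Lemma len_pscal a p : length (pscal a p) = length p.
Proof. unfold pscal; rewrite length_map; reflexivity. Qed.
Lemma len_mulX p n : (length p <= n)%nat -> (length (mulX p) <= S n)%nat.
Proof. destruct p; simpl; lia. Qed.
Lemma len_pder l : (length (pder l) <= length l)%nat.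
Proof. induction l as [|a l IH]; simpl; [lia|]. rewrite len_padd.
  pose proof (len_mulX _ _ IH). lia. Qed.

Definition Cb (l : list R) (B : R) := List.Forall (fun a : R => Rabs a <= B) l.

Lemma Cb_weak l B B' : Cb l B -> B <= B' -> Cb l B'.
Proof. intros H HB. eapply Forall_impl; [|exact H]. simpl; intros; lra. Qed.
Lemma Cb_padd p q B B' : Cb p B -> Cb q B' -> 0 <= B -> 0 <= B' -> Cb (padd p q) (B + B').
Proof.
  revert q; induction p as [|a p IH]; intros [|b q] Hp Hq HB HB'; simpl.
  - constructor.
  - eapply Cb_weak; [exact Hq| lra].
  - eapply Cb_weak; [exact Hp| lra].
  - inversion Hp; inversion Hq; subst. constructor.
    + eapply Rle_trans; [apply Rabs_triang| lra].
    + apply IH; auto.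
Qed.
Lemma Cb_pscal a p B : Cb p B -> Cb (pscal a p) (Rabs a * B).
Proof.
  unfold Cb, pscal; intros H. apply Forall_map. eapply Forall_impl; [|exact H].
  simpl; intros x Hx. rewrite Rabs_mult. apply Rmult_le_compat_l; [apply Rabs_pos|exact Hx].
Qed.
Lemma Cb_mulX p B : Cb p B -> 0 <= B -> Cb (mulX p) B.
Proof. destruct p; simpl; intros H HB; [constructor|]. constructor; auto. rewrite Rabs_R0; exact HB. Qed.
Lemma Cb_pder l B : Cb l B -> 0 <= B -> Cb (pder l) (INR (length l) * B).
Proof.
  induction l as [|a l IH]; intros H HB; [simpl; constructor|].
  change (pder (a::l)) with (padd l (mulX (pder l))).
  change (length (a::l)) with (S (length l)).
  inversion H; subst.
  assert (0 <= INR (length l)) by apply pos_INR.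
  replace (INR (S (length l)) * B) with (B + INR (length l) * B) by (rewrite S_INR; ring).
  apply Cb_padd; auto. apply Cb_mulX; auto. apply Rmult_le_pos; auto. apply Rmult_le_pos; auto.
Qed.

Lemma pev_bound l B u : Cb l B -> 0 <= B -> 0 <= u -> Rabs (pev l u) <= B * (1 + u) ^ length l.
Proof.
  intros H HB Hu; induction l as [|a l IH]; simpl.
  - rewrite Rabs_R0. lra.
  - inversion H; subst. specialize (IH H3).
    assert (1 <= (1 + u) ^ length l) by (apply pow_R1_Rle; lra).
    eapply Rle_trans; [apply Rabs_triang|]. rewrite Rabs_mult, (Rabs_right u) by lra.
    assert (u * Rabs (pev l u) <= u * (B * (1 + u) ^ length l)) by (apply Rmult_le_compat_l; lra).
    nra.
Qed.

Lemma len_mulX' p : (length (mulX p) <= S (length p))%nat.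
Proof. apply len_mulX; lia. Qed.

Definition Hstep (al : R) (h : list R) : list R :=
  let d := pder h in
  padd (pscal (2 * al) (padd h (padd (mulX h) (padd (mulX (mulX h)) (mulX (mulX (mulX h)))))))
       (padd (pscal (-2) (mulX h)) (pscal (-1) (padd d (mulX (mulX d))))).

Fixpoint Hp (al : R) (j : nat) : list R :=
  match j with O => 2 :: 2 :: nil | S j => Hstep al (Hp al j) end.

Lemma pev_Hstep al h u : pev (Hstep al h) u =
  2 * al * (1 + u) * (1 + u ^ 2) * pev h u - 2 * u * pev h u - (1 + u ^ 2) * pev (pder h) u.
Proof. unfold Hstep. rewrite !pev_padd, !pev_pscal, !pev_padd, !pev_mulX. ring. Qed.

Lemma Hp_inv j : exists A B c, 1 <= A /\ 0 < B /\ 0 < c /\ forall al, A <= al ->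
  Cb (Hp al j) (B * al ^ j) /\ (length (Hp al j) <= 3 * j + 2)%nat /\
  forall u, 0 <= u -> c * al ^ j * (1 + u) ^ (3 * j + 1) <= pev (Hp al j) u.
Proof.
  induction j as [|j IH].
  - exists 1, 2, 2. split; [lra|]. split; [lra|]. split; [lra|].
    intros al Hal. split; [|split].
    + unfold Cb. simpl. repeat constructor; rewrite Rabs_right; lra.
    + simpl; lia.
    + intros u Hu. simpl. lra.
  - destruct IH as (A & B & c & HA & HB & Hc & IH).
    set (K := INR (3 * j + 2) * B).
    assert (HK : 0 <= K) by (unfold K; apply Rmult_le_pos; [apply pos_INR| lra]).
    exists (Rmax A (2 * (2 * B + K) / c)), (10 * B + 2 * K), (c / 2).
    split; [eapply Rle_trans; [exact HA| apply Rmax_l]|].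
    split; [lra|]. split; [lra|].
    intros al Hal.
    assert (HAal : A <= al) by (eapply Rle_trans; [apply Rmax_l| exact Hal]).
    assert (Hal2 : 2 * (2 * B + K) / c <= al) by (eapply Rle_trans; [apply Rmax_r| exact Hal]).
    destruct (IH al HAal) as (Hcb & Hlen & Hlow).
    set (h := Hp al j). fold h in Hcb, Hlen, Hlow.
    set (X := al ^ j). fold X in Hcb, Hlow.
    assert (HX : 1 <= X) by (apply pow_R1_Rle; lra).
    assert (HBX : 0 <= B * X) by (apply Rmult_le_pos; lra).
    assert (Hd : Cb (pder h) (K * X)).
    { eapply Cb_weak. apply Cb_pder; [exact Hcb| exact HBX].
      unfold K. rewrite Rmult_assoc. apply Rmult_le_compat_r; [exact HBX|].
      apply le_INR; exact Hlen. }
    assert (HKX : 0 <= K * X) by (apply Rmult_le_pos; lra).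
    change (Hp al (S j)) with (Hstep al h).
    split; [|split].
    + eapply Cb_weak. unfold Hstep; cbv zeta.
      repeat first [ apply Cb_padd | apply Cb_pscal | apply Cb_mulX | exact Hcb | exact Hd
                   | exact HBX | exact HKX | apply Rplus_le_le_0_compat
                   | apply Rmult_le_pos | apply Rabs_pos ].
      replace (Rabs (-2)) with 2 by (unfold Rabs; destruct Rcase_abs; lra).
      replace (Rabs (-1)) with 1 by (unfold Rabs; destruct Rcase_abs; lra).
      rewrite (Rabs_right (2 * al)) by lra.
      change (al ^ S j) with (al * al ^ j). fold X.
      assert (B * X <= al * (B * X)) by (rewrite <- (Rmult_1_l (B * X)) at 1; apply Rmult_le_compat_r; lra).
      assert (K * X <= al * (K * X)) by (rewrite <- (Rmult_1_l (K * X)) at 1; apply Rmult_le_compat_r; lra).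
      lra.
    + unfold Hstep; cbv zeta. rewrite !len_padd, !len_pscal, !len_padd.
      pose proof (len_pder h).
      pose proof (len_mulX' h). pose proof (len_mulX' (mulX h)).
      pose proof (len_mulX' (mulX (mulX h))). pose proof (len_mulX' (pder h)).
      pose proof (len_mulX' (mulX (pder h))). lia.
    + intros u Hu.
      rewrite pev_Hstep.
      set (w := 1 + u). set (P := w ^ (3 * j + 1)).
      assert (Hw : 1 <= w) by (unfold w; lra).
      assert (HP : 1 <= P) by (apply pow_R1_Rle; lra).
      replace (w ^ (3 * S j + 1)) with (w ^ 3 * P)
        by (unfold P, w; rewrite <- pow_add; f_equal; lia).
      change (al ^ S j) with (al * X).
      assert (H1 := Hlow u Hu). fold w P in H1.
      assert (H2 := pev_bound h _ u Hcb HBX Hu).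
      assert (H3 := pev_bound (pder h) _ u Hd HKX Hu).
      assert (Hl1 : w ^ length h <= w * P).
      { unfold P. rewrite <- (pow_1 w) at 2. rewrite <- pow_add. apply Rle_pow; [lra| lia]. }
      assert (Hl2 : w ^ length (pder h) <= w * P).
      { pose proof (len_pder h). unfold P. rewrite <- (pow_1 w) at 2. rewrite <- pow_add. apply Rle_pow; [lra| lia]. }
      fold w in H2, H3.
      assert (E2 : Rabs (pev h u) <= B * X * (w * P)) by (eapply Rle_trans; [exact H2| apply Rmult_le_compat_l; lra]).
      assert (E3 : Rabs (pev (pder h) u) <= K * X * (w * P)) by (eapply Rle_trans; [exact H3| apply Rmult_le_compat_l; lra]).
      set (hv := pev h u) in *. set (dv := pev (pder h) u) in *.
      assert (Hc1 : c * X * P <= hv) by exact H1.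
      assert (HXP : 0 <= X * P) by (apply Rmult_le_pos; lra).
      assert (Hw3 : 1 <= w ^ 3) by (apply pow_R1_Rle; lra).
      set (M := X * P * w ^ 3).
      assert (HM : 0 <= M) by (unfold M; apply Rmult_le_pos; lra).
      assert (Q1 : w ^ 3 / 2 <= (1 + u) * (1 + u * (u * 1))).
      { unfold w. simpl. assert (0 <= (1 - u) * (1 - u) * (1 + u)) by (apply Rmult_le_pos; [apply Rle_0_sqr| lra]). nra. }
      assert (Q2 : (w ^ 3 / 2) * (c * X * P) <= (1 + u) * (1 + u * (u * 1)) * hv).
      { apply Rmult_le_compat. lra. apply Rmult_le_pos; [apply Rmult_le_pos|]; lra. exact Q1. exact Hc1. }
      assert (Q3 : u * hv <= B * M).
      { assert (hv <= B * X * (w * P)) by (eapply Rle_trans; [apply Rle_abs| exact E2]).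
        assert (H4 : u * hv <= w * (B * X * (w * P))).
        { assert (u <= w) by (unfold w; lra). apply Rmult_le_compat; try lra. apply Rle_trans with (c * X * P); [|lra].
          apply Rmult_le_pos; [apply Rmult_le_pos|]; lra. }
        unfold M. replace (w * (B * X * (w * P))) with (B * (X * P) * (w * w)) in H4 by ring.
        replace (B * (X * P * w ^ 3)) with (B * (X * P) * (w * w * w)) by (simpl; ring).
        assert (w * w <= w * w * w) by (rewrite <- (Rmult_1_r (w * w)) at 1; apply Rmult_le_compat_l; nra).
        assert (0 <= B * (X * P)) by (apply Rmult_le_pos; lra).
        assert (B * (X * P) * (w * w) <= B * (X * P) * (w * w * w)) by (apply Rmult_le_compat_l; lra).
        lra. }
      assert (Q4 : (1 + u * (u * 1)) * dv <= K * M).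
      { assert (dv <= K * X * (w * P)) by (eapply Rle_trans; [apply Rle_abs| exact E3]).
        assert (0 <= 1 + u * (u * 1)) by nra.
        assert ((1 + u * (u * 1)) * dv <= (1 + u * (u * 1)) * (K * X * (w * P))) by (apply Rmult_le_compat_l; lra).
        assert (1 + u * (u * 1) <= w * w) by (unfold w; nra).
        assert (0 <= K * X * (w * P)) by (apply Rmult_le_pos; [|apply Rmult_le_pos]; lra).
        assert ((1 + u * (u * 1)) * (K * X * (w * P)) <= (w * w) * (K * X * (w * P))) by (apply Rmult_le_compat_r; lra).
        unfold M. replace (K * (X * P * w ^ 3)) with (w * w * (K * X * (w * P))) by (simpl; ring).
        lra. }
      assert (Q5 : 2 * B + K <= al * (c / 2)).
      { apply (Rmult_le_compat_r (c / 2)) in Hal2; [|lra].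
        replace (2 * (2 * B + K) / c * (c / 2)) with (2 * B + K) in Hal2 by (field; lra). lra. }
      assert (Q6 : (2 * B + K) * M <= al * (c / 2) * M) by (apply Rmult_le_compat_r; lra).
      assert (Q7 : al * ((w ^ 3 / 2) * (c * X * P)) <= al * ((1 + u) * (1 + u * (u * 1)) * hv))
        by (apply Rmult_le_compat_l; lra).
      replace (al * ((w ^ 3 / 2) * (c * X * P))) with (al * (c / 2) * M) in Q7 by (unfold M; field).
      replace (c / 2 * (al * X) * (w ^ 3 * P)) with (al * (c / 2) * M) by (unfold M; ring).
      replace (u ^ 2) with (u * (u * 1)) by ring.
      unfold w in *. lra.
Qed.

Definition g (al s : R) := exp (- al * (1 + tan (PI / 2 * s)) ^ 2).
Definition Kf (al : R) (j : nat) (t : R) :=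
  exp (- al * (1 + tan (PI / 2 * t)) ^ 2) * (-1) ^ (S j) * al * (PI / 2) ^ (S j)
  * (1 + (tan (PI / 2 * t)) ^ 2) * pev (Hp al j) (tan (PI / 2 * t)).

Lemma cos_ne t : 0 < t < 1 -> cos (PI / 2 * t) <> 0.
Proof.
  intros Ht. pose proof PI_RGT_0.
  assert (0 < PI / 2 * t) by (apply Rmult_lt_0_compat; lra).
  assert (PI / 2 * t < PI / 2) by (rewrite <- (Rmult_1_r (PI/2)) at 2; apply Rmult_lt_compat_l; lra).
  apply Rgt_not_eq, cos_gt_0; lra.
Qed.

Lemma Kder al j t : 0 < t < 1 -> is_derive (Kf al j) t (Kf al (S j) t).
Proof.
  intros Ht. pose proof (cos_ne t Ht) as Hc.
  pose proof (is_derive_tan _ Hc) as Dt.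
  pose proof (is_derive_pev (Hp al j) (tan (PI / 2 * t))) as Dp.
  unfold Kf. eapply is_derive_eq. auto_derive.
  - assert (E1 : ex_derive (fun x : R => tan x) (PI / 2 * t)) by (eexists; exact Dt).
    assert (E2 : ex_derive (fun x : R => pev (Hp al j) x) (tan (PI / 2 * t))) by (eexists; exact Dp).
    tauto.
  - reflexivity.
  - replace (Derive (fun x : R => tan x) (PI / 2 * t)) with (tan (PI / 2 * t) ^ 2 + 1)
      by (symmetry; apply is_derive_unique; exact Dt).
    replace (Derive (fun x : R => pev (Hp al j) x) (tan (PI / 2 * t))) with (pev (pder (Hp al j)) (tan (PI / 2 * t)))
      by (symmetry; apply is_derive_unique; exact Dp).
    change (Hp al (S j)) with (Hstep al (Hp al j)). rewrite pev_Hstep.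
    simpl pow. ring.
Qed.

Lemma gder al t : 0 < t < 1 -> is_derive (g al) t (Kf al 0 t).
Proof.
  intros Ht. pose proof (cos_ne t Ht) as Hc.
  pose proof (is_derive_tan _ Hc) as Dt.
  unfold g, Kf. eapply is_derive_eq. auto_derive.
  - eexists; exact Dt.
  - reflexivity.
  - replace (Derive (fun x : R => tan x) (PI / 2 * t)) with (tan (PI / 2 * t) ^ 2 + 1)
      by (symmetry; apply is_derive_unique; exact Dt).
    simpl. ring.
Qed.

Lemma loc01 (P : R -> Prop) t : 0 < t < 1 -> (forall y, 0 < y < 1 -> P y) -> locally t P.
Proof.
  intros Ht HP. apply (locally_interval _ t (Finite 0) (Finite 1)); simpl; try lra.
  intros y H1 H2; apply HP; lra.
Qed.

Lemma Dn al j t : 0 < t < 1 -> Derive_n (g al) (S j) t = Kf al j t.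
Proof.
  revert t; induction j as [|j IH]; intros t Ht.
  - change (Derive (g al) t = Kf al 0 t). apply is_derive_unique, gder, Ht.
  - change (Derive (Derive_n (g al) (S j)) t = Kf al (S j) t).
    rewrite (Derive_ext_loc _ (Kf al j)).
    + apply is_derive_unique, Kder, Ht.
    + apply loc01; auto.
Qed.

Lemma ex_derive_sumf (F : nat -> R -> R) n x : (forall k, ex_derive (F k) x) ->
  ex_derive (fun u => sum_f_R0 (fun k => F k u) n) x.
Proof.
  intros H; induction n as [|n IH]; simpl.
  - apply H.
  - apply (ex_derive_plus (fun u => sum_f_R0 (fun k => F k u) n) (F (S n))); auto.
Qed.

Lemma poly2_cont D C al : continuity_pt (fun u => poly2_eval D C al u) 0.
Proof.
  apply continuity_pt_filterlim. apply (ex_derive_continuous (K := R_AbsRing) (V := R_NormedModule)).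
  unfold poly2_eval.
  apply (ex_derive_sumf (fun k u => sum_f_R0 (fun l => IZR (C k l) * al ^ k * u ^ l) D)).
  intros k. apply (ex_derive_sumf (fun l u => IZR (C k l) * al ^ k * u ^ l)).
  intros l. auto_derive. exact I.
Qed.

Theorem lemma2p1 (d : nat -> nat) (c : nat -> nat -> nat -> Z)
  (HF : forall (j : nat) (alpha t : R), (1 <= j)%nat -> 0 < alpha -> 0 < t < 1 ->
     Derive_n (fun s => phi alpha (sqrt s)) j t =
       exp (- alpha * (1 + tan (PI / 2 * t)) ^ 2) * (-1) ^ j * alpha * (PI / 2) ^ j
       * (1 + (tan (PI / 2 * t)) ^ 2) * poly2_eval (d j) (c j) alpha (tan (PI / 2 * t))) :
  forall j : nat, (1 <= j)%nat ->
    exists alphaj : R, 0 < alphaj /\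
      forall alpha u : R, alphaj <= alpha -> 0 <= u -> 0 <= poly2_eval (d j) (c j) alpha u.
Proof.
  intros j Hj. destruct j as [|j]; [lia|].
  destruct (Hp_inv j) as (A & B & cc & HA & HB & Hc & Hinv).
  exists A. split; [lra|]. intros al u Hal Hu.
  assert (Pos : forall v, 0 < v -> 0 < poly2_eval (d (S j)) (c (S j)) al v).
  { intros v Hv. pose proof PI_RGT_0 as Hpi.
    pose proof (atan_bound v) as Hb.
    assert (Ha0 : 0 < atan v) by (rewrite <- atan_0; apply atan_increasing; exact Hv).
    set (t := atan v / (PI / 2)).
    assert (Ht : 0 < t < 1).
    { unfold t. split. apply Rdiv_lt_0_compat; lra.
      apply (Rmult_lt_reg_r (PI / 2)); [lra|]. unfold Rdiv at 1. rewrite Rmult_assoc, Rinv_l by lra. lra. }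
    assert (Etan : PI / 2 * t = atan v) by (unfold t; field; lra).
    pose proof (HF (S j) al t Hj ltac:(lra) Ht) as E.
    rewrite (Derive_n_ext_loc _ (g al)) in E.
    2: { apply loc01; [exact Ht|]. intros y Hy. unfold phi, g.
         assert (sqrt y < 1) by (rewrite <- sqrt_1; apply sqrt_lt_1_alt; lra).
         destruct (Rlt_dec (sqrt y) 1); [|lra]. rewrite pow2_sqrt by lra. reflexivity. }
    rewrite (Dn al j t Ht) in E. unfold Kf in E.
    rewrite Etan, tan_atan in E.
    apply Rmult_eq_reg_l in E.
    2: { assert (0 < exp (- al * (1 + v) ^ 2)) by apply exp_pos.
         assert ((-1) ^ S j <> 0) by (apply pow_nonzero; lra).
         assert (0 < (PI / 2) ^ S j) by (apply pow_lt; lra).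
         assert (0 < 1 + v ^ 2) by nra.
         apply Rmult_integral_contrapositive_currified; [|apply Rgt_not_eq; lra].
         apply Rmult_integral_contrapositive_currified; [|apply Rgt_not_eq; lra].
         apply Rmult_integral_contrapositive_currified; [|apply Rgt_not_eq; lra].
         apply Rmult_integral_contrapositive_currified; [apply Rgt_not_eq; lra| assumption]. }
    rewrite <- E.
    assert (0 < cc * al ^ j * (1 + v) ^ (3 * j + 1)).
    { repeat apply Rmult_lt_0_compat; try lra; apply pow_lt; lra. }
    pose proof (Hinv al Hal) as (_ & _ & Hl). specialize (Hl v ltac:(lra)). lra. }
  destruct (Rle_lt_or_eq_dec 0 u Hu) as [Hu'|Hu'].
  - left; apply Pos, Hu'.
  - subst u. destruct (Rle_or_lt 0 (poly2_eval (d (S j)) (c (S j)) al 0)) as [H|H]; [exact H|].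
    exfalso. pose proof (poly2_cont (d (S j)) (c (S j)) al) as Hct.
    destruct (Hct (- poly2_eval (d (S j)) (c (S j)) al 0)) as (del & Hdel & Hx); [lra|].
    specialize (Hx (del / 2)).
    assert (Hdist : R_dist (poly2_eval (d (S j)) (c (S j)) al (del / 2)) (poly2_eval (d (S j)) (c (S j)) al 0)
                    < - poly2_eval (d (S j)) (c (S j)) al 0).
    { apply Hx. split. split; [exact I| lra]. unfold R_dist, dist; simpl; unfold R_dist. rewrite Rminus_0_r, Rabs_right; lra. }
    unfold R_dist in Hdist. pose proof (Pos (del / 2) ltac:(lra)).
    pose proof (Rle_abs (poly2_eval (d (S j)) (c (S j)) al (del / 2) - poly2_eval (d (S j)) (c (S j)) al 0)).
    lra.
Qed.
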